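(* Let $K$ be a field and let $r,s\ge 3$ be integers. Let $R$ be a convex $(r+s-2)$-gon with vertices labelled cyclically $1,2,\ldots,r+s-2$. The internal diagonal $\{r-1,r\}$ divides $R$ into two subpolygons: the $r$-gon $P$ with vertices $1,2,\ldots,r$ and the $s$-gon $Q$ with vertices $r-1,r,r+1,\ldots,r+s-2$. Let $D=\{\{r-1,r\}\}$, a dissection of $R$. Let $f:\mathrm{diag}(R)\to K$ be a weak frieze on $R$ with respect to $D$, and suppose $f(r-1,r)\neq 0$. Let $f_P$ and $f_Q$ be the restrictions of $f$ to $\mathrm{diag}(P)$ and $\mathrm{diag}(Q)$ respectively (these are weak friezes with respect to the empty dissection). Let $M_f$, $M_{f_P}$, $M_{f_Q}$ be the associated weak frieze matrices. Then $$\det(M_f) = -f(r-1,r)^{-2}\cdot \det(M_{f_P})\cdot \det(M_{f_Q}).$$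
   Context: For a convex polygon with vertices $1,\ldots,n$ (cyclically ordered), a diagonal is any unordered pair $\{i,j\}$ of distinct vertices (including pairs of neighbouring vertices, i.e. boundary edges); $\mathrm{diag}(P)$ denotes the set of all diagonals. A diagonal $\{i,j\}$ is internal if $i,j$ are not neighbours in the cyclic order. Two diagonals $\{i,j\}$ and $\{k,\ell\}$ cross if in the cyclic order $i<k<j<\ell$ or $i<\ell<j<k$. A dissection is a set of pairwise non-crossing internal diagonals (possibly empty). For a map $f:\mathrm{diag}(P)\to K$ write $f(i,j)=f(\{i,j\})$. Such $f$ is a weak frieze with respect to a dissection $D$ if for every pair of crossing diagonals $\{i,j\},\{k,\ell\}$ at least one of which lies in $D$, the Ptolemy relation $f(i,j)f(k,\ell)=f(i,k)f(j,\ell)+f(i,\ell)f(j,k)$ holds. (With $D=\emptyset$ every map is a weak frieze.) The weak frieze matrix of $f$ on a polygon with vertices $v_1,\ldots,v_m$ is the symmetric $m\times m$ matrix with $(a,b)$-entry $0$ if $a=b$ and $f(v_a,v_b)$ if $a\neq b$ (its determinant does not depend on the chosen ordering of the vertices). *)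

(* Defs.v *)
From HB Require Import structures.
From mathcomp Require Import all_boot all_order all_algebra.
Set Implicit Arguments. Unset Strict Implicit. Unset Printing Implicit Defensive.
Import Order.TTheory GRing.Theory Num.Theory.
Local Open Scope ring_scope.

(* A convex polygon is given by the list [L] of its vertex labels (natural
   numbers), in cyclic order.  A map on diagonals is encoded as a symmetric
   function [f : nat -> nat -> K] (symmetry is assumed where needed);
   [f i j] stands for f({i,j}). *)

Definition pos (L : seq nat) (v : nat) : nat := index v L.

Definition crossing (L : seq nat) (i j k l : nat) : bool :=
  [&& i \in L, j \in L, k \in L & l \in L] &&
  (((pos L i < pos L k)%N && (pos L k < pos L j)%N && (pos L j < pos L l)%N) ||
   ((pos L i < pos L l)%N && (pos L l < pos L j)%N && (pos L j < pos L k)%N)).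

(* a dissection is given as a list of diagonals (ordered pairs, read as
   unordered pairs) *)
Definition in_diss (D : seq (nat * nat)) (i j : nat) : bool :=
  ((i, j) \in D) || ((j, i) \in D).

Definition weak_frieze (K : fieldType) (L : seq nat) (D : seq (nat * nat))
  (f : nat -> nat -> K) : Prop :=
  forall i j k l : nat, crossing L i j k l -> in_diss D i j || in_diss D k l ->
    f i j * f k l = f i k * f j l + f i l * f j k.

Definition wf_matrix (K : fieldType) (f : nat -> nat -> K) (L : seq nat)
  : 'M[K]_(size L) :=
  \matrix_(a < size L, b < size L)
    (if a == b then 0 else f (nth 0%N L a) (nth 0%N L b)).

(* Cyclic order of R obtained by gluing P = (1,...,r) and
   Q = (r-1,r,...,r+s-2) along their common edge {r-1,r}:
   1,2,...,r-1, r+s-2, r+s-3, ..., r+1, r. *)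
Definition R_order (r s : nat) : seq nat :=
  iota 1 r.-1 ++ rev (iota r s.-1).

(* Main.v *)
Require Import Defs.
From HB Require Import structures.
From mathcomp Require Import all_boot all_order all_algebra.
From mathcomp Require Import all_fingroup ring zify.
Import Order.TTheory GRing.Theory Num.Theory.
Set Implicit Arguments. Unset Strict Implicit. Unset Printing Implicit Defensive.
Local Open Scope ring_scope.

Definition wfm (K : fieldType) (f : nat -> nat -> K) n (v : 'I_n -> nat) : 'M[K]_n :=
  \matrix_(i, j) (if i == j then 0 else f (v i) (v j)).

Lemma wf_wfm (K : fieldType) (f : nat -> nat -> K) L n (e : size L = n) :
  \det (wf_matrix f L) = \det (@wfm K f n (fun i => nth 0%N L i)).
Proof. by case: n / e. Qed.

Lemma wfm_ext (K : fieldType) (f : nat -> nat -> K) n (v w : 'I_n -> nat) :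
  (forall i, v i = w i) -> wfm f v = wfm f w.
Proof. by move=> h; apply/matrixP => i j; rewrite !mxE !h. Qed.

Lemma wfm_perm (K : fieldType) (f : nat -> nat -> K) n (v : 'I_n -> nat) (p : 'S_n) :
  \det (wfm f (fun i => v (p i))) = \det (wfm f v).
Proof.
have -> : wfm f (fun i => v (p i)) = row_perm p (col_perm p (wfm f v)).
  by apply/matrixP=> i j; rewrite !mxE (inj_eq perm_inj).
rewrite row_permE col_permE !det_mulmx det_perm -odd_permV det_perm.
rewrite odd_permV mulrA mulrC mulrA -signr_addb addbb mul1r.
by [].
Qed.

Lemma wf_perm (K : fieldType) (f : nat -> nat -> K) L L' :
  perm_eq L L' -> \det (wf_matrix f L) = \det (wf_matrix f L').
Proof.
move=> pL; have sz := perm_size pL.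
rewrite (wf_wfm f (erefl (size L))) (wf_wfm f (esym sz)).
have /tuple_permP [p hp] : perm_eq L' (in_tuple L) by rewrite perm_sym.
rewrite -(wfm_perm f _ p); congr (\det _); apply: wfm_ext => i.
rewrite hp nth_mktuple (tnth_nth 0%N) /=.
by [].
Qed.

Lemma wfm_block (K : fieldType) (f : nat -> nat -> K) m n (v : 'I_(m + n) -> nat) :
  wfm f v = block_mx (wfm f (fun i => v (lshift n i)))
                     (\matrix_(i, j) f (v (lshift n i)) (v (rshift m j)))
                     (\matrix_(i, j) f (v (rshift m i)) (v (lshift n j)))
                     (wfm f (fun i => v (rshift m i))).
Proof.
rewrite -[wfm f v]submxK; congr block_mx; apply/matrixP => i j; rewrite !mxE.
- by rewrite eq_lshift.
- case: eqP => // /(congr1 val) /= h; have := ltn_ord i; rewrite h; lia.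
- case: eqP => // /(congr1 val) /= h; have := ltn_ord j; rewrite -h; lia.
- by rewrite eq_rshift.
Qed.

Lemma det_schur (K : fieldType) m n (N Ninv : 'M[K]_m) (X : 'M[K]_(m, n)) Y Z :
  Ninv *m N = 1%:M -> \det (block_mx N X Y Z) = \det N * \det (Z - Y *m Ninv *m X).
Proof.
move=> hN.
have -> : block_mx N X Y Z =
   block_mx 1%:M 0 (Y *m Ninv) 1%:M *m block_mx N X 0 (Z - Y *m Ninv *m X).
  rewrite mulmx_block !mul1mx !mul0mx ?mulmx0 !addr0 ?add0r -mulmxA hN mulmx1.
  by rewrite addrC subrK.
by rewrite det_mulmx det_lblock det_ublock !det1 !mul1r.
Qed.

Lemma nthAB_l (A B : seq nat) (j : 'I_(size A)) : nth 0%N (A ++ B) j = nth 0%N A j.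
Proof. by rewrite nth_cat ltn_ord. Qed.
Lemma nthAB_r (A B : seq nat) j : nth 0%N (A ++ B) (size A + j) = nth 0%N B j.
Proof. by rewrite nth_cat ltnNge leq_addr addKn. Qed.

Lemma key (K : fieldType) (f : nat -> nat -> K) (fsym : forall i j, f i j = f j i)
  x y (A B : seq nat) (hc : f x y != 0)
  (hAB : forall a b, a \in A -> b \in B -> f a b * f x y = f a x * f b y + f a y * f b x) :
  \det (wfm f (fun i : 'I_(2 + (size A + size B)) => nth 0%N (x :: y :: A ++ B) i)) * (- f x y ^+ 2)
  = \det (wfm f (fun i : 'I_(2 + size A) => nth 0%N (x :: y :: A) i)) *
    \det (wfm f (fun i : 'I_(2 + size B) => nth 0%N (x :: y :: B) i)).
Proof.
set c := f x y.
set p := size A. set q := size B.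
pose xy := [:: x; y].
pose N : 'M[K]_2 := wfm f (fun i => nth 0%N xy i).
pose Ninv : 'M[K]_2 := \matrix_(i, j) (if i == j then 0 else c^-1).
pose U : 'M[K]_(p, 2) := \matrix_(i, k) f (nth 0%N A i) (nth 0%N xy k).
pose W : 'M[K]_(q, 2) := \matrix_(i, k) f (nth 0%N B i) (nth 0%N xy k).
pose MA := wfm f (fun i : 'I_p => nth 0%N A i).
pose MB := wfm f (fun i : 'I_q => nth 0%N B i).
have hN : Ninv *m N = 1%:M.
  apply/matrixP => i j; rewrite !mxE !big_ord_recl big_ord0 !mxE.
  case: i => [[|[|//]] Hi]; case: j => [[|[|//]] Hj]; rewrite /= -/c ?(fsym y x) -/c;
    by rewrite ?mul0r ?mulr0 ?addr0 ?add0r ?(mulVf hc).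
have detN : \det N = - c ^+ 2.
  rewrite (expand_det_row _ ord0) !big_ord_recl big_ord0 /cofactor !det_mx11 !mxE /=.
  rewrite /bump /= (fsym y x) -/c; ring.
have eP : wfm f (fun i : 'I_(2 + p) => nth 0%N (x :: y :: A) i) = block_mx N U^T U MA.
  rewrite wfm_block; congr block_mx.
  - by apply: wfm_ext => -[[|[|//]] Hi].
  - apply/matrixP => i j; rewrite !mxE /= add0n fsym.
    by case: i => [[|[|//]] Hi].
  - apply/matrixP => i j; rewrite !mxE /=.
    by case: j => [[|[|//]] Hj].
have eQ : wfm f (fun i : 'I_(2 + q) => nth 0%N (x :: y :: B) i) = block_mx N W^T W MB.
  rewrite wfm_block; congr block_mx.
  - by apply: wfm_ext => -[[|[|//]] Hi].
  - apply/matrixP => i j; rewrite !mxE /= add0n fsym.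
    by case: i => [[|[|//]] Hi].
  - apply/matrixP => i j; rewrite !mxE /=.
    by case: j => [[|[|//]] Hj].
have eR : wfm f (fun i : 'I_(2 + (p + q)) => nth 0%N (x :: y :: A ++ B) i) =
   block_mx N (row_mx U^T W^T) (col_mx U W)
     (block_mx MA (U *m Ninv *m W^T) (W *m Ninv *m U^T) MB).
  rewrite wfm_block; congr block_mx.
  - by apply: wfm_ext => -[[|[|//]] Hi].
  - rewrite -[LHS]hsubmxK; congr row_mx; apply/matrixP => i j; rewrite !mxE /= add0n fsym.
    + by rewrite nthAB_l; case: i => [[|[|//]] Hi].
    + by rewrite nthAB_r; case: i => [[|[|//]] Hi].
  - rewrite -[LHS]vsubmxK; congr col_mx; apply/matrixP => i j; rewrite !mxE /= add0n.
    + by rewrite nthAB_l; case: j => [[|[|//]] Hj].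
    + by rewrite nthAB_r; case: j => [[|[|//]] Hj].
  rewrite wfm_block; congr block_mx.
  - by rewrite /MA; apply: wfm_ext => i /=; rewrite add0n nthAB_l.
  - apply/matrixP => i j; rewrite !mxE /= !add0n nthAB_l nthAB_r.
    rewrite !big_ord_recl !big_ord0 !mxE !big_ord_recl !big_ord0 !mxE /=.
    have ha : nth 0%N A i \in A := mem_nth 0%N (ltn_ord i).
    have hb : nth 0%N B j \in B := mem_nth 0%N (ltn_ord j).
    apply: (mulIf hc); rewrite hAB //.
    by rewrite /c; field.
  - apply/matrixP => i j; rewrite !mxE /= !add0n nthAB_l nthAB_r.
    rewrite !big_ord_recl !big_ord0 !mxE !big_ord_recl !big_ord0 !mxE /=.
    have ha : nth 0%N A j \in A := mem_nth 0%N (ltn_ord j).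
    have hb : nth 0%N B i \in B := mem_nth 0%N (ltn_ord i).
    apply: (mulIf hc); rewrite fsym hAB //.
    by rewrite /c; field.
  - by rewrite /MB; apply: wfm_ext => i /=; rewrite add0n nthAB_r.
rewrite eR eP eQ !(det_schur _ _ _ hN).
rewrite -!mulmxA mul_mx_row mul_col_row opp_block_mx add_block_mx !subrr det_ublock detN.
ring.
Qed.


Lemma iota_rcons m n : iota m n.+1 = iota m n ++ [:: (m + n)%N].
Proof. by rewrite -addn1 iotaD. Qed.

Lemma cross_ok (A B : seq nat) x y a b :
  x \notin A -> y \notin A -> b \notin A -> x != y -> x != b -> y \notin B ->
  a \in A -> b \in B -> crossing (A ++ x :: rev (y :: B)) a b x y.
Proof.
move=> hxA hyA hbA hxy hxb hyB ha hb.
set L := A ++ _.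
have ia : index a L = index a A by rewrite index_cat ha.
have ix : index x L = size A by rewrite index_cat (negbTE hxA) /= eqxx addn0.
have ib : index b L = (size A + (index b (rev B)).+1)%N.
  by rewrite index_cat (negbTE hbA) /= (negbTE hxb) rev_cons -cats1 index_cat mem_rev hb.
have iy : index y L = (size A + (size B).+1)%N.
  rewrite index_cat (negbTE hyA) /= (negbTE hxy) rev_cons -cats1 index_cat mem_rev (negbTE hyB).
  by rewrite /= eqxx addn0 size_rev.
have hiA : (index a A < size A)%N by rewrite index_mem.
have hiB : (index b (rev B) < size B)%N by rewrite -size_rev index_mem mem_rev.
have szL : size L = (size A + (size B).+2)%N by rewrite size_cat /= size_rev.
rewrite /crossing /pos -!index_mem ia ix ib iy szL.
lia.
Qed.

Theorem theorem3p3 (K : fieldType) (r s : nat) (hr : (3 <= r)%N) (hs : (3 <= s)%N)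
  (f : nat -> nat -> K) (fsym : forall i j, f i j = f j i)
  (hf : weak_frieze (R_order r s) [:: (r.-1, r)] f)
  (hne : f r.-1 r != 0) :
  \det (wf_matrix f (R_order r s)) =
    - (f r.-1 r) ^- 2 * \det (wf_matrix f (iota 1 r))
      * \det (wf_matrix f (iota r.-1 s)).
Proof.
case: r hr hf hne => [|[|[|r']]] // _; case: s hs => [|[|[|s']]] // _.
set r := r'.+3; set s := s'.+3.
pose A := iota 1 r'.+1. pose B := iota r'.+4 s'.+1.
have eRo : R_order r s = A ++ r'.+2 :: rev (r'.+3 :: B).
  rewrite /R_order /A /B; change (iota 1 r'.+2 ++ rev (iota r'.+3 s'.+2) = iota 1 r'.+1 ++ r'.+2 :: rev (r'.+3 :: iota r'.+4 s'.+1))%N.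
  by rewrite iota_rcons -catA.
have eP : iota 1 r = A ++ [:: r'.+2; r'.+3].
  rewrite /A; change (iota 1 r'.+3 = iota 1 r'.+1 ++ [:: r'.+2; r'.+3])%N.
  by rewrite !iota_rcons -catA.
have eQ : iota r.-1 s = r'.+2 :: r'.+3 :: B by [].
move=> hf hne.
set x := r'.+2; set y := r'.+3.
have hne' : f x y != 0 by [].
have hAB : forall a b, a \in A -> b \in B -> f a b * f x y = f a x * f b y + f a y * f b x.
  move=> a b ha hb; apply: hf.
    rewrite eRo; apply: cross_ok => //; rewrite ?mem_iota; try lia.
    - move: hb; rewrite /B mem_iota; lia.
    - move: hb; rewrite /B mem_iota; lia.
  by apply/orP; right; apply/orP; left; exact: mem_head.
have k := key fsym hne' hAB.
change (\det (wf_matrix f (R_order r s)) = - f x y ^- 2 * \det (wf_matrix f (iota 1 r)) * \det (wf_matrix f (iota r.-1 s))).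
rewrite eRo eP eQ.
rewrite (@wf_perm _ f _ (x :: y :: A ++ B)); last first.
  apply/seq.permP => P; rewrite /x /y /= !count_cat /= count_rev /= ?count_cat /=; lia.
rewrite (@wf_perm _ f (A ++ [:: x; y]) (x :: y :: A)); last first.
  apply/seq.permP => P; rewrite /x /y /= !count_cat /=; lia.
have szR : size (x :: y :: A ++ B) = (2 + (size A + size B))%N by rewrite /= size_cat.
have szP : size (x :: y :: A) = (2 + size A)%N by [].
have szQ : size (x :: y :: B) = (2 + size B)%N by [].
rewrite (wf_wfm f szR) (wf_wfm f szP) (wf_wfm f szQ).
have nz : - f x y ^+ 2 != 0 by rewrite oppr_eq0 expf_neq0.
apply: (mulIf nz); rewrite k.
by field.
Qed.
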